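(* Let $m,n>1$ be square-free integers with $\gcd(m,n)=1$ and let $K=\mathbb{Q}(\sqrt{m},\sqrt{n})$. Then \[ \frac{1}{96\sqrt2}\, D_K^{1/4} \le M(\mathcal{O}_K). \]
   Context: For a nonconstant polynomial $f(x)=c\prod_{i=1}^d (x-\alpha_i)\in\mathbb{C}[x]$, the Mahler measure is $M(f)=|c|\prod_{|\alpha_i|\ge 1}|\alpha_i|$. For an algebraic number $\alpha$, $M(\alpha)$ is the Mahler measure of its minimal polynomial over $\mathbb{Z}$ (with content $1$). For a number field $K$ with ring of integers $\mathcal{O}_K$ and absolute discriminant $D_K$, $M(\mathcal{O}_K)=\min\{M(\alpha):\alpha\in\mathcal{O}_K,\ \mathbb{Q}(\alpha)=K\}$. *)

(* Defs.v *)
From HB Require Import structures.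
From mathcomp Require Import all_boot all_order all_algebra all_field.
Set Implicit Arguments. Unset Strict Implicit. Unset Printing Implicit Defensive.
Import Order.TTheory GRing.Theory Num.Theory.
Local Open Scope ring_scope.

Definition squarefree (m : nat) : Prop :=
  forall p : nat, prime p -> ~~ (p * p %| m)%N.

Definition biquad (m n : nat) (x : algC) : Prop :=
  exists a b c d : rat,
     x = ratr a + ratr b * sqrtC m%:R + ratr c * sqrtC n%:R
         + ratr d * (sqrtC m%:R * sqrtC n%:R).

Definition ring_of_integers (K : algC -> Prop) (x : algC) : Prop :=
  K x /\ x \in Aint.

(* Q(alpha): the smallest subfield of algC containing alpha
   (for algebraic alpha, Q(alpha) = Q[alpha]) *)
Definition Qadj (alpha x : algC) : Prop :=
  exists q : {poly rat}, x = (map_poly ratr q).[alpha].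

Definition generates (alpha : algC) (K : algC -> Prop) : Prop :=
  forall x, Qadj alpha x <-> K x.

(* Mahler measure of a polynomial over algC:
   M(f) = |c| * prod_{roots z} max(1, |z|), roots counted with multiplicity *)
Definition poly_roots (f : {poly algC}) : seq algC :=
  sval (closed_field_poly_normal f).

Definition mahler_poly (f : {poly algC}) : algC :=
  `|lead_coef f| * \prod_(z <- poly_roots f) Num.max 1 `|z|.

(* p is the minimal polynomial of alpha over Z with content 1
   (unique up to sign, which does not affect the Mahler measure):
   nonzero, vanishes at alpha, of least degree among such integer
   polynomials, and primitive (gcd of coefficients is 1). *)
Definition minpolyZ (alpha : algC) (p : {poly int}) : Prop :=
  [/\ p != 0,
      root (map_poly intr p) alpha,
      (forall q : {poly int}, q != 0 -> root (map_poly intr q) alpha ->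
          (size p <= size q)%N)
    & `|zcontents p|%N = 1%N].

Definition mahler_alg_is (alpha : algC) (M : algC) : Prop :=
  exists2 p, minpolyZ alpha p & M = mahler_poly (map_poly intr p).

Definition integral_basis (O : algC -> Prop) (w : 'I_4 -> algC) : Prop :=
  [/\ forall i, O (w i),
      (forall x, O x -> exists c : 'I_4 -> int, x = \sum_i (c i)%:~R * w i)
    & (forall c : 'I_4 -> int, \sum_i (c i)%:~R * w i = 0 -> forall i, c i = 0)].

(* a complete list of the 4 embeddings of a quartic field K into C:
   every embedding K -> C extends to a ring morphism algC -> algC; we ask for
   4 ring morphisms with pairwise distinct restrictions to K *)
Definition all_embeddings (K : algC -> Prop) (s : 'I_4 -> {rmorphism algC -> algC}) : Prop :=
  forall i j, i != j -> exists2 x, K x & s i x != s j x.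

Definition abs_disc (w : 'I_4 -> algC) (s : 'I_4 -> {rmorphism algC -> algC}) : algC :=
  `|\det (\matrix_(i, j) s i (w j)) ^+ 2|.

(* Main.v *)
Require Import Defs.
From HB Require Import structures.
From mathcomp Require Import all_boot all_order all_algebra all_field.
From mathcomp Require Import ring.
Import Order.TTheory GRing.Theory Num.Theory.
Local Open Scope ring_scope.


Lemma sqfree_rat (k : nat) (q : rat) (z : int) :
  squarefree k -> q ^+ 2 * k%:R = z%:~R -> denq q = 1.
Proof.
move=> sqk E.
have dpos := denq_gt0 q.
set r := numq q in E *; set d := denq q in E dpos *.
have qE : q = r%:~R / d%:~R by rewrite divq_num_den.
have dne0 : (d%:~R : rat) != 0 by rewrite intr_eq0 gt_eqF.
have E2 : (r ^+ 2 * k%:R = z * d ^+ 2 :> int).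
  apply: (@intr_inj rat); rewrite !rmorphM /=.
  move: E; rewrite qE => E.
  rewrite -[LHS](@mulfK _ (d%:~R ^+ 2)) ?expf_neq0 // -E.
  rewrite [RHS]mulrC; apply/eqP; rewrite -subr_eq0; apply/eqP.
  rewrite -mulrA. field. by [].
have E3 : (`|r| ^ 2 * k = `|z| * `|d| ^ 2)%N.
  have := congr1 absz E2; rewrite !abszM /= natz /= => H.
  by rewrite !expnS expn0 !muln1 H.
have cop : coprime (`|d| ^ 2) (`|r| ^ 2) by rewrite coprimeXl // coprimeXr // coprime_sym coprime_num_den.
have dk : (`|d| ^ 2 %| k)%N.
  rewrite -(Gauss_dvdr _ cop) E3; exact: dvdn_mull.
have : `|d|%N = 1%N.
  apply/eqP; rewrite eqn_leq absz_gt0 gt_eqF // andbT leqNgt; apply/negP => d1.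
  have pp := pdiv_prime d1.
  have := sqk _ pp; rewrite (dvdn_trans _ dk) //.
  by rewrite expnS expn1 dvdn_mul // pdiv_dvd.
by move: dpos; rewrite /d; case: (denq q) => //= n _ ->.
Qed.

Lemma aint_lb (k : nat) (q : rat) (x : algC) :
  squarefree k -> x ^+ 2 = k%:R -> ratr q * x \in Aint -> q != 0 ->
  `|x| <= `|ratr q * x|.
Proof.
move=> sqk x2 Ai q0.
have y2 : (ratr q * x) ^+ 2 = ratr (q ^+ 2 * k%:R) :> algC.
  by rewrite exprMn x2 rmorphM rmorphXn /= rmorph_nat.
have : (ratr q * x) ^+ 2 \is a Num.int.
  by apply: Cint_rat_Aint; [rewrite y2 Crat_rat | rewrite rpredX].
move=> /intrP [z]; rewrite y2 -(ratr_int _ z) => /fmorph_inj hz.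
have dq := @sqfree_rat k q z sqk hz.
have qE : q = (numq q)%:~R by rewrite -[LHS]divq_num_den dq divr1.
have nq0 : numq q != 0 by rewrite numq_eq0.
rewrite normrM ler_peMl // qE ratr_int -intr_norm ler1z.
by rewrite -gtz0_ge1 normr_gt0.
Qed.

Lemma mem_rem_neq {T : eqType} {x y : T} {r : seq T} :
  y \in r -> y != x -> y \in rem x r.
Proof.
elim: r => //= z r IH; rewrite inE => /orP [/eqP <- | yr] yx.
  by rewrite (negbTE yx) mem_head.
by case: eqP => _ //; rewrite inE IH ?orbT.
Qed.

Lemma max1_ge (z : algC) : (1 <= Num.max 1 `|z|) && (`|z| <= Num.max 1 `|z|).
Proof.
have c : (1 : algC) >=< `|z| by apply: real_comparable; rewrite ?realE ?ler01 ?normr_ge0.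
by rewrite !comparable_le_max ?lexx ?orbT // comparable_sym.
Qed.
Lemma max1_ge1 (z : algC) : 1 <= Num.max 1 `|z|. Proof. by case/andP: (max1_ge z). Qed.
Lemma max1_gez (z : algC) : `|z| <= Num.max 1 `|z|. Proof. by case/andP: (max1_ge z). Qed.
Lemma max1_ge0 (z : algC) : 0 <= Num.max 1 `|z|. Proof. exact: le_trans ler01 (max1_ge1 z). Qed.

Lemma prod_max_ge1 (r : seq algC) : 1 <= \prod_(z <- r) Num.max 1 `|z|.
Proof.
elim: r => [|z r IH]; first by rewrite big_nil.
rewrite big_cons; apply: (le_trans IH); rewrite ler_peMl ?max1_ge1 //.
exact: le_trans ler01 IH.
Qed.


Lemma pC_roots (p : {poly int}) (p0 : p != 0) x : root (map_poly intr p) x -> x \in poly_roots (map_poly intr p).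
Proof.
set pC := map_poly intr p.
rewrite /poly_roots; case: (closed_field_poly_normal pC) => r /= E.
have l0 : lead_coef pC != 0.
  by rewrite lead_coef_map_inj //; [rewrite intr_eq0 lead_coef_eq0 | exact: intr_inj].
by rewrite {1}E rootZ // root_prod_XsubC.
Qed.

Lemma lead_ge1 (p : {poly int}) (p0 : p != 0) : 1 <= `|lead_coef (map_poly intr p : {poly algC})|.
Proof.
rewrite lead_coef_map_inj //; last exact: intr_inj.
by rewrite -intr_norm ler1z -gtz0_ge1 normr_gt0 lead_coef_eq0.
Qed.

Lemma mahler_ge1 (p : {poly int}) (p0 : p != 0) x : root (map_poly intr p) x -> `|x| <= mahler_poly (map_poly intr p).
Proof.
move=> /(@pC_roots p p0 x) xr; rewrite /mahler_poly (big_rem x xr) /=.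
apply: (le_trans (y := Num.max 1 `|x|)); first exact: max1_gez.
rewrite -[X in X <= _]mul1r ler_pM ?(@lead_ge1 p p0) //.
  exact: max1_ge0.
by rewrite ler_peMr ?prod_max_ge1 // max1_ge0.
Qed.

Lemma mahler_ge2 (p : {poly int}) (p0 : p != 0) x y : root (map_poly intr p) x -> root (map_poly intr p) y -> y != x ->
  `|x| * `|y| <= mahler_poly (map_poly intr p).
Proof.
move=> /(@pC_roots p p0 x) xr /(@pC_roots p p0 y) yr yx.
have yr' := mem_rem_neq yr yx.

rewrite /mahler_poly (big_rem x xr) /= (big_rem y yr') /=.
set R := \prod_(_ <- _) _.
have R1 : 1 <= R by exact: prod_max_ge1.
apply: (le_trans (y := Num.max 1 `|x| * Num.max 1 `|y|)).
  by rewrite ler_pM ?max1_gez.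
apply: (le_trans (y := Num.max 1 `|x| * (Num.max 1 `|y| * R))).
  by rewrite ler_wpM2l ?max1_ge0 // ler_peMr ?max1_ge0.
rewrite ler_peMl ?(@lead_ge1 p p0) //.
by rewrite mulr_ge0 ?max1_ge0 // mulr_ge0 ?max1_ge0 // (le_trans ler01 R1).
Qed.

Definition sg (b : bool) : algC := if b then 1 else -1.

Lemma sgn_sqrt (f : {rmorphism algC -> algC}) (k : nat) :
  f (sqrtC k%:R) = sg (f (sqrtC k%:R) == sqrtC k%:R) * sqrtC k%:R.
Proof.
case: eqP => [->|ne]; first by rewrite /= mul1r.
have : (f (sqrtC k%:R)) ^+ 2 == (sqrtC k%:R) ^+ 2.
  by rewrite -rmorphXn sqrtCK rmorph_nat.
by rewrite eqf_sqr => /orP [/eqP // | /eqP ->]; rewrite /= mulN1r.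
Qed.

Lemma s_biq (f : {rmorphism algC -> algC}) (x y : algC) e1 e2 a b c d :
  f x = sg e1 * x -> f y = sg e2 * y ->
  f (ratr a + ratr b * x + ratr c * y + ratr d * (x * y)) =
  ratr a + ratr b * (sg e1 * x) + ratr c * (sg e2 * y)
         + ratr d * ((sg e1 * x) * (sg e2 * y)).
Proof.
move=> hx hy; have hr z : f (ratr z) = ratr z := fmorph_rat f z.
by rewrite !rmorphD !(rmorphM f (ratr _)) !hr (rmorphM f x) hx hy.
Qed.

Lemma fix_ratpoly (f : {rmorphism algC -> algC}) (q : {poly rat}) :
  map_poly f (map_poly ratr q) = map_poly ratr q.
Proof. by rewrite -map_poly_comp; apply: eq_map_poly => z /=; rewrite fmorph_rat. Qed.

Lemma fix_intpoly (f : {rmorphism algC -> algC}) (q : {poly int}) :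
  map_poly f (map_poly intr q) = map_poly intr q.
Proof. by rewrite -map_poly_comp; apply: eq_map_poly => z /=; rewrite rmorph_int. Qed.


Definition key (m n : nat) (s : 'I_4 -> {rmorphism algC -> algC}) (i : 'I_4) : bool * bool :=
  (s i (sqrtC (m%:R : algC)) == sqrtC (m%:R : algC), s i (sqrtC (n%:R : algC)) == sqrtC (n%:R : algC)).

Lemma s_form (m n : nat) (s : 'I_4 -> {rmorphism algC -> algC}) (i : 'I_4) a b c d :
  let sm := sqrtC (m%:R : algC) in let sn := sqrtC (n%:R : algC) in
  s i (ratr a + ratr b * sm + ratr c * sn + ratr d * (sm * sn)) =
  ratr a + ratr b * (sg (key m n s i).1 * sm) + ratr c * (sg (key m n s i).2 * sn)
         + ratr d * ((sg (key m n s i).1 * sm) * (sg (key m n s i).2 * sn)).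
Proof. by move=> sm sn; apply: s_biq; apply: sgn_sqrt. Qed.

Lemma key_inj (m n : nat) (s : 'I_4 -> {rmorphism algC -> algC}) :
  all_embeddings (biquad m n) s -> injective (key m n s).
Proof.
move=> hs i j kij; apply/eqP; apply/negPn/negP => /hs [x [a [b [c [d ->]]]]].
by rewrite !(s_form m n s) kij eqxx.
Qed.

Lemma key_bij (m n : nat) (s : 'I_4 -> {rmorphism algC -> algC}) :
  all_embeddings (biquad m n) s -> bijective (key m n s).
Proof.
move=> hs; apply: (inj_card_bij (@key_inj m n s hs)).
by rewrite card_prod card_bool card_ord.
Qed.

Lemma sqrt_Aint (k : nat) : sqrtC (k%:R : algC) \in Aint.
Proof.
apply: (@root_monic_Aint ('X^2 - (k%:R)%:P)).
- by rewrite /root !hornerE sqrtCK subrr.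
- exact: monicXnsubC.
- by rewrite polyOverXnsubC rpred_nat.
Qed.


Definition bv (m n : nat) (k : 'I_4) : algC :=
  match val k with 0 => 1 | 1 => sqrtC (m%:R : algC) | 2 => sqrtC (n%:R : algC) | _ => sqrtC (m%:R : algC) * sqrtC (n%:R : algC) end.
Definition chi (k : nat) (y : bool * bool) : algC :=
  match k with 0 => 1 | 1 => sg y.1 | 2 => sg y.2 | _ => sg y.1 * sg y.2 end.

Lemma s_bv (m n : nat) (s : 'I_4 -> {rmorphism algC -> algC}) i k :
  s i (bv m n k) = chi k (key m n s i) * bv m n k.
Proof.
rewrite /bv /chi /key /=.
case: k => [[|[|[|[|k]]]] Hk] //=.
- by rewrite rmorph1 mul1r.
- exact: sgn_sqrt.
- exact: sgn_sqrt.
- by rewrite rmorphM /= {1}(sgn_sqrt (s i) m) {1}(sgn_sqrt (s i) n) mulrACA.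
Qed.

Lemma bv_O (m n : nat) k : ring_of_integers (biquad m n) (bv m n k).
Proof.
rewrite /bv; case: k => [[|[|[|[|k]]]] Hk] //=; split.
- by exists 1, 0, 0, 0; rewrite !(rmorph0, rmorph1, mul0r, addr0).
- exact: Aint1.
- by exists 0, 1, 0, 0; rewrite !(rmorph0, rmorph1, mul0r, mul1r, addr0, add0r).
- exact: sqrt_Aint.
- by exists 0, 0, 1, 0; rewrite !(rmorph0, rmorph1, mul0r, mul1r, addr0, add0r).
- exact: sqrt_Aint.
- by exists 0, 0, 0, 1; rewrite !(rmorph0, rmorph1, mul0r, mul1r, addr0, add0r).
- by rewrite rpredM ?sqrt_Aint.
Qed.

Lemma sum_key (m n : nat) (s : 'I_4 -> {rmorphism algC -> algC}) (hs : all_embeddings (biquad m n) s) (G : bool * bool -> algC) :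
  \sum_i G (key m n s i) = G (true, true) + G (true, false) + G (false, true) + G (false, false).
Proof.
transitivity (\sum_y G y); first by rewrite (reindex (key m n s) (onW_bij _ (@key_bij m n s hs))).
rewrite (eq_bigr (fun p => G (p.1, p.2))); last by case.
rewrite -(pair_bigA _ (fun a b => G (a, b))) /= !big_bool /= !addrA.
by [].
Qed.

Lemma disc_le (m n : nat) (s : 'I_4 -> {rmorphism algC -> algC}) (w : 'I_4 -> algC)
  (hs : all_embeddings (biquad m n) s) (ib : integral_basis (ring_of_integers (biquad m n)) w)
  (m0 : (0 < m)%N) (n0 : (0 < n)%N) :
  abs_disc w s <= (4 * (sqrtC (m%:R : algC) * sqrtC (n%:R : algC))) ^+ 4.
Proof.
case: ib => [_ span _].
have /fin_all_exists [C hC] : forall k, exists c : 'I_4 -> int, bv m n k = \sum_i (c i)%:~R * w i.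
  by move=> k; apply: span; apply: bv_O.
set A := \matrix_(i, j) s i (w j).
set B := \matrix_(i, k) s i (bv m n k).
set Cm := \matrix_(k, j) C k j : 'M[int]_4.
have BE : B = A *m (map_mx intr Cm)^T.
  apply/matrixP => i k; rewrite !mxE hC rmorph_sum; apply: eq_bigr => j _.
  by rewrite !mxE rmorphM /= rmorph_int mulrC.
have BtB : B^T *m B = diag_mx (\row_k (4 * bv m n k ^+ 2)).
  apply/matrixP => k l; rewrite !mxE.
  rewrite (eq_bigr (fun i => (fun y => chi k y * chi l y * (bv m n k * bv m n l)) (key m n s i))); last first.
    by move=> i _; rewrite !mxE !(s_bv m n s) mulrACA.
  rewrite (@sum_key m n s hs (fun y => chi k y * chi l y * (bv m n k * bv m n l))).
  case: k => [[|[|[|[|k]]]] Hk]; case: l => [[|[|[|[|l]]]] Hl] //=; rewrite /bv /=; ring.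
have detB : \det B ^+ 2 = (4 * ((sqrtC (m%:R : algC)) * (sqrtC (n%:R : algC)))) ^+ 4.
  rewrite expr2 -{1}det_tr -det_mulmx BtB det_diag.
  rewrite !big_ord_recr big_ord0 /= !mxE /bv /=.
  ring.
have dB : \det B = \det A * (\det Cm)%:~R.
  by rewrite BE det_mulmx det_tr det_map_mx.
have sm0 : (sqrtC (m%:R : algC)) != 0 by rewrite sqrtC_eq0 pnatr_eq0 -lt0n.
have sn0 : (sqrtC (n%:R : algC)) != 0 by rewrite sqrtC_eq0 pnatr_eq0 -lt0n.
have pos : 0 <= (4 * ((sqrtC (m%:R : algC)) * (sqrtC (n%:R : algC)))) ^+ 4 :> algC.
  by rewrite exprn_ge0 // mulr_ge0 // mulr_ge0 // sqrtC_ge0 ler0n.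
have dC0 : \det Cm != 0.
  apply/eqP => h; move: detB; rewrite dB h mulr0 expr0n /= => /eqP.
  by rewrite eq_sym expf_eq0 /= !mulf_eq0 pnatr_eq0 /= (negbTE sm0) (negbTE sn0).
rewrite /abs_disc -/A -detB -[X in _ <= X]ger0_norm; last by rewrite detB.
have h1 : 1 <= `|(\det Cm)%:~R ^+ 2 : algC|.
  by rewrite normrX exprn_ege1 // -intr_norm ler1z -gtz0_ge1 normr_gt0.
rewrite dB exprMn [X in _ <= X]normrM.
by rewrite ler_peMr ?normr_ge0.
Qed.

Lemma sqfree_mul (m n : nat) : squarefree m -> squarefree n -> coprime m n ->
  squarefree (m * n).
Proof.
move=> sqm sqn cop p pp; apply/negP => h.
case pn: (p %| n)%N.
- have pm : ~~ (p %| m)%N.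
    apply/negP => pm; have : (p %| gcdn m n)%N by rewrite dvdn_gcd pm pn.
    by rewrite (eqP cop) dvdn1 => /eqP p1; rewrite p1 in pp.
  have cpm : coprime (p * p) m by rewrite coprimeMl (prime_coprime _ pp) pm.
  by move: (sqn p pp); rewrite -(Gauss_dvdr _ cpm) h.
- have cpn : coprime (p * p) n by rewrite coprimeMl (prime_coprime _ pp) pn.
  by move: (sqm p pp); rewrite -(Gauss_dvdl _ cpn) h.
Qed.

Lemma tri4 (x y z t : algC) : `|x - y - z + t| <= `|x| + `|y| + `|z| + `|t|.
Proof.
apply: (le_trans (ler_normD _ _)); rewrite lerD2r.
apply: (le_trans (ler_normB _ _)); rewrite lerD2r.
exact: ler_normB.
Qed.

Theorem corollary3p2 (m n : nat) (w : 'I_4 -> algC)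
    (s : 'I_4 -> {rmorphism algC -> algC}) (alpha M : algC) :
  (1 < m)%N -> (1 < n)%N -> squarefree m -> squarefree n -> coprime m n ->
  integral_basis (ring_of_integers (biquad m n)) w ->
  all_embeddings (biquad m n) s ->
  ring_of_integers (biquad m n) alpha ->
  generates alpha (biquad m n) ->
  mahler_alg_is alpha M ->
  (96 * sqrtC 2)^-1 * 4.-root (abs_disc w s) <= M.
Proof.
move=> m1 n1 sqm sqn cop ib hs [Ka Aa] gen [p [p0 rootp _ _] ->].
set sm := sqrtC (m%:R : algC); set sn := sqrtC (n%:R : algC).
have [g keyK gK] := @key_bij m n s hs.
set pC := map_poly intr p.
have sdist i j : i != j -> s i alpha != s j alpha.
  move=> ij; apply/eqP => e; have [x Kx ne] := hs i j ij.
  have [q xE] := (gen x).2 Kx.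
  by move: ne; rewrite xE -!horner_map !fix_ratpoly e eqxx.
have sroot i : root pC (s i alpha).
  by have := rmorph_root (s i) rootp; rewrite fix_intpoly.
have sA i : s i alpha \in Aint by rewrite Aint_aut.
move: Ka => [a [b [c [d aE]]]].
set F := fun y : bool * bool => s (g y) alpha.
have FE y : F y = ratr a + ratr b * (sg y.1 * sm) + ratr c * (sg y.2 * sn)
         + ratr d * ((sg y.1 * sm) * (sg y.2 * sn)).
  by rewrite /F aE (s_form m n s) gK.
have Finj y y' : y != y' -> F y != F y'.
  move=> yy; apply: sdist; apply: contra yy => /eqP e.
  by rewrite -(gK y) -(gK y') e.
have Froot y : root pC (F y) by apply: sroot.
have FA y : F y \in Aint by apply: sA.
have M1 y : `|F y| <= mahler_poly pC := @mahler_ge1 p p0 _ (Froot y).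
have M2 y y' : y' != y -> `|F y| * `|F y'| <= mahler_poly pC.
  move=> yy; apply: (@mahler_ge2 p p0) => //; exact: Finj.
have sm0 : 0 <= sm by rewrite sqrtC_ge0 ler0n.
have sn0 : 0 <= sn by rewrite sqrtC_ge0 ler0n.
set Mh := mahler_poly pC.
have four0 : (4 : rat) != 0 by [].
have key8 : sm * sn <= 8 * Mh.
  case: (eqVneq d 0) => [d0|dn0].
  - have b0 : b != 0.
      apply/eqP => b0; have := Finj (true,true) (false,true) isT.
      by rewrite !FE b0 d0 !rmorph0 !mul0r eqxx.
    have c0 : c != 0.
      apply/eqP => c0; have := Finj (true,true) (true,false) isT.
      by rewrite !FE c0 d0 !rmorph0 !mul0r eqxx.
    have eu : ratr (4 * b) * sm = F (true,true) - F (false,true) + F (true,false) - F (false,false).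
      rewrite !FE /= rmorphM /= rmorph_nat; ring.
    have ev : ratr (4 * c) * sn = F (true,true) + F (false,true) - F (true,false) - F (false,false).
      rewrite !FE /= rmorphM /= rmorph_nat; ring.
    have euv : ratr (4 * b) * sm * (ratr (4 * c) * sn) =
        4 * (F (false,true) * F (true,false) - F (true,true) * F (false,false)).
      rewrite !FE d0 /= !rmorphM /= rmorph0 rmorph_nat; ring.
    have hu : ratr (4 * b) * sm \in Aint by rewrite eu !(rpredB, rpredD) ?FA.
    have hv : ratr (4 * c) * sn \in Aint by rewrite ev !(rpredB, rpredD) ?FA.
    have lu := @aint_lb m _ _ sqm (sqrtCK _) hu (mulf_neq0 four0 b0).
    have lv := @aint_lb n _ _ sqn (sqrtCK _) hv (mulf_neq0 four0 c0).
    have h := ler_pM (normr_ge0 _) (normr_ge0 _) lu lv.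
    rewrite (ger0_norm sm0) (ger0_norm sn0) in h.
    apply: le_trans h _.
    rewrite -normrM euv normrM ger0_norm ?ler0n //.
    have inner : `|F (false, true) * F (true, false) - F (true, true) * F (false, false)| <= Mh + Mh.
      apply: le_trans (ler_normB _ _) _.
      by rewrite !normrM lerD ?M2.
    apply: (le_trans (ler_wpM2l (ler0n _ 4) inner)).
    by rewrite le_eqVlt; apply/orP; left; apply/eqP; ring.
  - have et : ratr (4 * d) * (sm * sn) = F (true,true) - F (true,false) - F (false,true) + F (false,false).
      rewrite !FE /= rmorphM /= rmorph_nat; ring.
    have ht : ratr (4 * d) * (sm * sn) \in Aint by rewrite et !(rpredB, rpredD) ?FA.
    have sq2 : (sm * sn) ^+ 2 = (m * n)%:R by rewrite exprMn !sqrtCK natrM.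
    have lt := @aint_lb (m * n) _ _ (@sqfree_mul m n sqm sqn cop) sq2 ht (mulf_neq0 four0 dn0).
    rewrite (ger0_norm (mulr_ge0 sm0 sn0)) et in lt.
    apply: (le_trans lt); apply: (le_trans (tri4 _ _ _ _)).
    apply: (le_trans (y := Mh + Mh + Mh + Mh)); first by rewrite !lerD ?M1.
    have M0 : 0 <= Mh := le_trans (normr_ge0 _) (M1 (true,true)).
    apply: (le_trans (y := 4 * Mh)).
      by rewrite le_eqVlt; apply/orP; left; apply/eqP; ring.
    by rewrite ler_wpM2r // ler_nat.
have M0 : 0 <= Mh := le_trans (normr_ge0 _) (M1 (true,true)).
have m0 : (0 < m)%N by apply: ltnW.
have n0 : (0 < n)%N by apply: ltnW.
have X4 : 4.-root (abs_disc w s) <= 4 * (sm * sn).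
  have pos : 0 <= 4 * (sm * sn) by rewrite mulr_ge0 ?ler0n // mulr_ge0.
  rewrite -[X in _ <= X](@exprCK _ 4 _ isT pos).
  rewrite ler_rootC ?nnegrE ?normr_ge0 ?exprn_ge0 //.
  exact: (@disc_le m n s w hs ib m0 n0).
have s2 : 1 <= sqrtC (2 : algC).
  by rewrite -{1}sqrtC1 ler_sqrtC ?nnegrE ?ler01 ?ler0n // mulr2n lerDl ler01.
have r0 : 0 < 96 * sqrtC (2 : algC).
  by rewrite mulr_gt0 ?ltr0n // (lt_le_trans ltr01 s2).
rewrite ler_pdivrMl //.
apply: (le_trans X4).
apply: (le_trans (ler_wpM2l (ler0n _ 4) key8)).
rewrite mulrA -natrM /= ler_wpM2r // (le_trans (y := 96)) ?ler_nat //.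
by rewrite ler_peMr ?ler0n.
Qed.
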